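(* Let $q\in\mathbb{C}$ with $|q|>1$, put $\varepsilon=1-q$, and let $a_1,a_2,b_1,b_2$ be nonzero complex parameters. Let $x_1(t),x_2(t),y_1(t),y_2(t)$ be functions of $t$ (such that all denominators below are nonzero) and define the $4\times4$ matrices \[ M_4(z,t)=\begin{bmatrix}a_1&y_1(t)-\frac{y_2(t)}{qt}&-1&0\\0&b_1&x_2(t)-x_1(t)&-1\\-tz&0&a_2&y_2(t)-y_1(t)\\(x_1(t)-tx_2(t))z&-z&0&b_2\end{bmatrix}, \] \[ B_4(z,t)=\begin{bmatrix}\frac{qta_1}{qt+x_1(qt)y_2(t)}&y_1(t)&-1&0\\0&1+x_1(qt)y_1(t)&-x_1(qt)&0\\-tz&0&\frac{a_2}{1+x_2(qt)y_1(t)}&y_2(t)\\-tx_2(qt)z&0&0&1+x_2(qt)y_2(t)\end{bmatrix}. \] Set $M_4^*(z,t)=\frac{1}{qa_1}M_4(z,t)$ and $B_4^*(z,t)=\frac{qt+x_1(qt)y_2(t)}{qta_1}B_4(z,t)$, and write $M_4^*(z,t)=M_{4,0}^*(t)+zM_{4,1}^*(t)$, $B_4^*(z,t)=B_{4,0}^*(t)+zB_{4,1}^*(t)$ with $M_{4,0}^*,M_{4,1}^*,B_{4,0}^*,B_{4,1}^*$ independent of $z$. For $\zeta$ such that $q^{-1}\varepsilon\zeta I+M_{4,1}^*(t)$ is invertible, define \[ N_4(\zeta,t)=\left(q^{-1}\varepsilon\zeta I+M_{4,1}^*(t)\right)^{-1}\left(\varepsilon\zeta M_{4,0}^*(t)+M_{4,1}^*(t)\right),\qquad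 C_4(\zeta,t)=B_{4,0}^*(t)+\varepsilon^{-1}\zeta^{-1}B_{4,1}^*(t)\left(I-N_4(\zeta,t)\right). \] Then the first column of each of the matrices $N_4(\zeta,t)$ and $C_4(\zeta,t)$ equals the fundamental vector ${}^t[1,0,0,0]$.
   Context: $I$ denotes the $4\times 4$ identity matrix. The matrices $M_4$, $B_4$ form the Lax pair $\Psi_4(qz,t)=M_4(z,t)\Psi_4(z,t)$, $\Psi_4(z,qt)=B_4(z,t)\Psi_4(z,t)$ whose compatibility condition is the paper's system $q$-$P_{(2,2)}$; the matrices $N_4,C_4$ arise from it by a $q$-Laplace transformation. *)

(* Defs.v *)
(* Complex numbers are modelled as R[i] = complex R for an
   arbitrary real closed field R (R = the real numbers gives C). *)
From HB Require Import structures.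
From mathcomp Require Import all_boot all_order all_algebra.
From mathcomp Require Export complex.
Set Implicit Arguments. Unset Strict Implicit. Unset Printing Implicit Defensive.
Import Order.TTheory GRing.Theory Num.Theory.
Local Open Scope ring_scope.

Section Defs.
Variable C : numClosedFieldType.

Definition mx4 (r0 r1 r2 r3 : seq C) : 'M[C]_4 :=
  \matrix_(i < 4, j < 4) nth 0 (nth [::] [:: r0; r1; r2; r3] i) j.

Variables (q a1 a2 b1 b2 : C) (x1 x2 y1 y2 : C -> C).

Definition eps : C := 1 - q.

Definition M4 (z t : C) : 'M[C]_4 := mx4
  [:: a1; y1 t - y2 t / (q * t); -1; 0]
  [:: 0; b1; x2 t - x1 t; -1]
  [:: - (t * z); 0; a2; y2 t - y1 t]
  [:: (x1 t - t * x2 t) * z; - z; 0; b2].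

Definition B4 (z t : C) : 'M[C]_4 := mx4
  [:: q * t * a1 / (q * t + x1 (q * t) * y2 t); y1 t; -1; 0]
  [:: 0; 1 + x1 (q * t) * y1 t; - x1 (q * t); 0]
  [:: - (t * z); 0; a2 / (1 + x2 (q * t) * y1 t); y2 t]
  [:: - (t * x2 (q * t) * z); 0; 0; 1 + x2 (q * t) * y2 t].

Definition M4s (z t : C) : 'M[C]_4 := (q * a1)^-1 *: M4 z t.
Definition B4s (z t : C) : 'M[C]_4 :=
  ((q * t + x1 (q * t) * y2 t) / (q * t * a1)) *: B4 z t.

(* z-coefficients: M4s and B4s are affine in z *)
Definition M4s0 (t : C) : 'M[C]_4 := M4s 0 t.
Definition M4s1 (t : C) : 'M[C]_4 := M4s 1 t - M4s 0 t.
Definition B4s0 (t : C) : 'M[C]_4 := B4s 0 t.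
Definition B4s1 (t : C) : 'M[C]_4 := B4s 1 t - B4s 0 t.

Definition N4 (zeta t : C) : 'M[C]_4 :=
  invmx ((q^-1 * eps * zeta)%:M + M4s1 t) *m (eps * zeta *: M4s0 t + M4s1 t).

Definition C4 (zeta t : C) : 'M[C]_4 :=
  B4s0 t + (eps^-1 * zeta^-1) *: (B4s1 t *m (1%:M - N4 zeta t)).

End Defs.

Definition e1 (C : numClosedFieldType) : 'cV[C]_4 := delta_mx 0 0.

(* Main.v *)
Require Import Defs.
From HB Require Import structures.
From mathcomp Require Import all_boot all_order all_algebra.
From mathcomp Require Import complex.
From mathcomp Require Import ring.
Import Order.TTheory GRing.Theory Num.Theory.
Local Open Scope ring_scope.

Theorem mainTheorem1 (R : rcfType) (q a1 a2 b1 b2 : R[i]) (x1 x2 y1 y2 : R[i] -> R[i])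
  (t zeta : R[i])
  (hq : 1 < `|q|)
  (ha1 : a1 != 0) (ha2 : a2 != 0) (hb1 : b1 != 0) (hb2 : b2 != 0)
  (ht : t != 0)
  (hden1 : q * t + x1 (q * t) * y2 t != 0)
  (hden2 : 1 + x2 (q * t) * y1 t != 0)
  (hzeta : zeta != 0)
  (hinv : (q^-1 * eps q * zeta)%:M + M4s1 q a1 a2 b1 b2 x1 x2 y1 y2 t \in unitmx) :
  col 0 (N4 q a1 a2 b1 b2 x1 x2 y1 y2 zeta t) = e1 _ /\
  col 0 (C4 q a1 a2 b1 b2 x1 x2 y1 y2 zeta t) = e1 _.
Proof.
have hq0 : q != 0.
  by apply/negP => /eqP q0; move: hq; rewrite q0 normr0 ltr10.
set A := (_ + _) in hinv.
have hX : col 0 (eps q * zeta *: M4s0 q a1 a2 b1 b2 x1 x2 y1 y2 t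
                 + M4s1 q a1 a2 b1 b2 x1 x2 y1 y2 t) = col 0 A.
  apply/matrixP => i j; rewrite (ord1 j) /A.
  case: i => [[|[|[|[|i]]]] Hi] //;
  rewrite !mxE /= ?mulr1n ?mulr0n; field; apply/andP; split => //.
have hN : col 0 (N4 q a1 a2 b1 b2 x1 x2 y1 y2 zeta t) = e1 _.
  rewrite /N4 colE -mulmxA -colE hX colE mulmxA mulVmx // mul1mx //.
split => //.
have hZ : (1%:M - N4 q a1 a2 b1 b2 x1 x2 y1 y2 zeta t) *m e1 _ = 0.
  by rewrite mulmxBl mul1mx -colE hN subrr.
rewrite /C4 colE mulmxDl -!scalemxAl -!mulmxA hZ mulmx0 scaler0 addr0 -colE.
apply/matrixP => i j; rewrite (ord1 j).
case: i => [[|[|[|[|i]]]] Hi] //; rewrite !mxE /=.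
- field; rewrite hden1 ht ha1 hq0 //.
- by rewrite ?mulr0n !(mulr0, oppr0).
- by rewrite ?mulr0n !(mulr0, oppr0).
- by rewrite ?mulr0n !(mulr0, oppr0).
Qed.
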